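(* Let $p$ be a prime with $p\equiv 5\pmod 6$, and regard $r$ as an indeterminate. Let $c_1(r)$ and $c_2(r)$ be the coefficients of $x^{p-2}y^{p-1}z^{2p-1}$ and $x^{2p-1}y^{p-1}z^{p-2}$ in $(x^3z+y^4+ry^2z^2+z^4)^{p-1}$, viewed as polynomials in $r$ over $\mathbb F_p$, and let $d_1(r)$ (resp. $d_2(r)$) be the coefficient of $y^{p-1}$ in $(y^4+ry^2+1)^{(2p-1)/3}$ (resp. $(y^4+ry^2+1)^{(p-2)/3}$), so that $d_1(r)=\binom{p-1}{(p-2)/3}c_1(r)$ and $d_2(r)=\binom{p-1}{(p-2)/3}c_2(r)$. Then: \begin{enumerate} \item If $p\equiv 5\pmod{12}$, $d_2(r)$ is a polynomial in $r^2$ with nonzero constant term. If $p\equiv 11\pmod{12}$, $d_2(r)$ is divisible by $r$ and $d_2(r)/r$ is a polynomial in $r^2$ with nonzero constant term. \item Writing $r=\alpha+\beta$ with $\alpha\beta=1$, one has \[d_1(r)=(\alpha\beta)^{(p+1)/6}\sum_{i+j=(p-1)/2}\binom{(2p-1)/3}{i}\binom{(2p-1)/3}{j}\alpha^i\beta^j,\qquad d_2(r)=\sum_{i+j=(p-5)/6}\binom{(p-2)/3}{i}\binom{(p-2)/3}{j}\alpha^i\beta^j,\] where the two sums (i.e. $(\alpha\beta)^{-(p+1)/6}d_1(r)$ and $d_2(r)$, as polynomials in $\alpha,\beta$) are not divisible by $\alpha\beta$. Hence $\deg_r c_1=\deg_r d_1=(p-1)/2$ and $\deg_r c_2=\deg_r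 d_2=(p-5)/6$. \item Modulo $p$, the polynomial $c_1(r)$ (resp. $d_1(r)$) is divisible by $c_2(r)$ (resp. $d_2(r)$). \end{enumerate} *)

(* Defs.v *)
From mathcomp Require Import all_boot all_order all_algebra.
Set Implicit Arguments. Unset Strict Implicit. Unset Printing Implicit Defensive.
Import GRing.Theory.
Local Open Scope ring_scope.

Definition quartic (p : nat) : {poly {poly {poly {poly 'F_p}}}} :=
  let x : {poly {poly {poly {poly 'F_p}}}} := 'X in
  let y : {poly {poly {poly {poly 'F_p}}}} := ('X)%:P in
  let z : {poly {poly {poly {poly 'F_p}}}} := ('X)%:P%:P in
  let r : {poly {poly {poly {poly 'F_p}}}} := ('X)%:P%:P%:P in
  x ^+ 3 * z + y ^+ 4 + r * y ^+ 2 * z ^+ 2 + z ^+ 4.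

Definition coef_xyz (p a b c : nat) (P : {poly {poly {poly {poly 'F_p}}}})
  : {poly 'F_p} := ((P`_a)`_b)`_c.

Definition c1 (p : nat) : {poly 'F_p} :=
  coef_xyz (p - 2) (p - 1) (2 * p - 1) (quartic p ^+ (p - 1)).
Definition c2 (p : nat) : {poly 'F_p} :=
  coef_xyz (2 * p - 1) (p - 1) (p - 2) (quartic p ^+ (p - 1)).

Definition yquartic (p : nat) : {poly {poly 'F_p}} :=
  'X ^+ 4 + ('X)%:P * 'X ^+ 2 + 1.

Definition d1 (p : nat) : {poly 'F_p} :=
  (yquartic p ^+ ((2 * p - 1) %/ 3))`_(p - 1).
Definition d2 (p : nat) : {poly 'F_p} :=
  (yquartic p ^+ ((p - 2) %/ 3))`_(p - 1).

Definition bsum (R : nzRingType) (N m : nat) (a b : R) : R :=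
  \sum_(i < m.+1) ('C(N, i) * 'C(N, m - i))%:R * a ^+ i * b ^+ (m - i).

(* Main.v *)
Require Import Defs.
From mathcomp Require Import all_boot all_order all_algebra.
From mathcomp Require Import ring zify.
Import GRing.Theory.
Local Open Scope ring_scope.


Section Gen.
Variable R : comNzRingType.

Lemma sum_ext0 (F : nat -> R) n k :
  (forall i, (n <= i)%N -> (i < n + k)%N -> F i = 0) ->
  \sum_(i < n + k) F i = \sum_(i < n) F i.
Proof.
elim: k => [|k IH] H; first by rewrite addn0.
rewrite addnS big_ord_recr /= H; last 2 first.
- exact: leq_addr.
- by rewrite addnS.
rewrite addr0; apply: IH => i Hi Hi2; apply: H => //; lia.
Qed.

Lemma coef_XaddC_exp (c : R) n j :
  (('X + c%:P) ^+ n)`_j = ('C(n, j))%:R * c ^+ (n - j).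
Proof.
elim: n j => [|n IH] j.
  rewrite expr0 coef1 bin0n; case: j => [|j] /=; first by rewrite mul1r.
  by rewrite mul0r.
rewrite exprSr mulrDr coefD coefMX coefMC IH.
case: j => [|j] /=.
  by rewrite add0r IH !bin0 subn0 !mul1r exprSr.
rewrite IH binS natrD mulrDl.
rewrite subSS addrC.
case: (ltnP j n) => Hj.
  rewrite -mulrA -exprSr.
  by have -> : (n - j.+1).+1 = (n - j)%N by lia.
have Hj' : (n < j.+1)%N by lia.
rewrite (bin_small Hj') !mul0r add0r.
case: (ltnP n j) => Hj2; first by rewrite bin_small ?mul0r.
have -> : j = n by lia.
by rewrite subnn.
Qed.


Definition E (M h : nat) (a b : R) : R :=
  \sum_(i < h.+1) ('C(M, i) * 'C(i, h - i))%:R * a ^+ (i - (h - i)) * b ^+ (M - i).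

Lemma coef_quad_exp (a b : R) M h :
  ((('X ^+ 2 + a%:P * 'X + b%:P) ^+ M)`_h) = E M h a b.
Proof.
have -> : 'X ^+ 2 + a%:P * 'X + b%:P = b%:P + 'X * ('X + a%:P) by ring.
rewrite exprDn coef_sum.
pose F (i : nat) : R := if (i <= h)%N then
   ('C(M, i) * 'C(i, h - i))%:R * a ^+ (i - (h - i)) * b ^+ (M - i) else 0.
have HG : forall i : 'I_M.+1,
    ((b%:P ^+ (M - i) * ('X * ('X + a%:P)) ^+ i) *+ 'C(M, i))`_h = F i.
  move=> i; rewrite coefMn -rmorphXn coefCM exprMn coefXnM /F.
  case: ltnP => Hi; first by rewrite mulr0 mul0rn.
  rewrite coef_XaddC_exp natrM -mulr_natr; ring.
rewrite (eq_bigr (fun i : 'I_M.+1 => F i)) //.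
rewrite /E -(sum_ext0 F M.+1 h); last first.
  by move=> i Hi _; rewrite /F; case: ifP => // _; rewrite bin_small // !mul0r.
have -> : (M.+1 + h = h.+1 + M)%N by lia.
rewrite (sum_ext0 F h.+1 M); last first.
  by move=> i Hi _; rewrite /F; case: ifP => //; lia.
by apply: eq_bigr => i _; rewrite /F -ltnS ltn_ord.
Qed.


Definition D (P : {poly {poly R}}) : {poly {poly R}} := map_poly (@deriv R) P.

Lemma coefD_ (P : {poly {poly R}}) i : (D P)`_i = (P`_i)^`().
Proof. by rewrite /D coef_map. Qed.

Lemma DD (P Q : {poly {poly R}}) : D (P + Q) = D P + D Q.
Proof. by apply/polyP => i; rewrite coefD !coefD_ coefD derivD. Qed.

Lemma DMn (P : {poly {poly R}}) k : D (P *+ k) = D P *+ k.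
Proof. by apply/polyP => i; rewrite coefMn !coefD_ coefMn derivMn. Qed.

Lemma DM (P Q : {poly {poly R}}) : D (P * Q) = D P * Q + P * D Q.
Proof.
apply/polyP => n; rewrite coefD !coefD_ !coefM linear_sum -big_split /=.
by apply: eq_bigr => i _; rewrite derivM !coefD_.
Qed.

Lemma DX : D 'X = 0.
Proof.
apply/polyP => i; rewrite coefD_ coefX coef0.
by case: (i == 1)%N; rewrite /= ?raddf0 // -polyC1 derivC.
Qed.

Lemma DC (c : {poly R}) : D c%:P = (c^`())%:P.
Proof. by rewrite /D map_polyC. Qed.

Lemma D1 : D 1 = 0.
Proof. by rewrite -polyC1 DC -polyC1 derivC raddf0. Qed.

Lemma Dexp (P : {poly {poly R}}) n : D (P ^+ n.+1) = P ^+ n * D P *+ n.+1.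
Proof.
elim: n => [|n IH]; first by rewrite expr1 expr0 mul1r.
by rewrite exprS DM IH !exprS; ring.
Qed.

Definition rr : {poly {poly R}} := ('X : {poly R})%:P.
Definition Gq : {poly {poly R}} := 'X ^+ 2 + rr * 'X + 1.
Definition theta (F : {poly {poly R}}) := 'X * F^`().

Definition Phi (N : nat) (F : {poly {poly R}}) :=
  (4%:R - rr ^+ 2) * D (D F) + (rr *+ (2 * N) - rr) * D F
  + theta (theta F) - theta F *+ (2 * N).

Lemma DGq : D Gq = 'X.
Proof.
rewrite /Gq !DD DM DX /rr DC derivX D1 expr2 DM DX.
by rewrite polyC1; ring.
Qed.

Lemma DD0 : D 0 = 0.
Proof. by rewrite /D map_poly0. Qed.

Lemma deriv1' (S : nzRingType) : (1 : {poly S})^`() = 0.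
Proof. by rewrite -polyC1 derivC. Qed.

Lemma drr : rr^`() = 0.
Proof. by rewrite /rr derivC. Qed.

Lemma Drr : D rr = 1.
Proof. by rewrite /rr DC derivX polyC1. Qed.

Lemma dGq : Gq^`() = 'X *+ 2 + rr.
Proof. by rewrite /Gq !derivE /= expr1 mul0r add0r mulr1 !addr0. Qed.

Lemma ddGq : (Gq^`())^`() = 2%:R.
Proof. by rewrite dGq !derivE addr0. Qed.

Lemma Phi_G N : Phi N (Gq ^+ N) = 0.
Proof.
rewrite /Phi /theta.
case: N => [|[|n]].
- by rewrite expr0 D1 DD0 deriv1' !(mulr0, mul0r, mul0rn, subr0, addr0, raddf0).
- rewrite expr1 DGq DX derivM derivX ddGq dGq. ring.
rewrite Dexp DGq DMn DM Dexp DX DGq.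
rewrite deriv_exp /= derivM derivX derivMn derivM deriv_exp /= ddGq dGq.
rewrite !exprS.
move: (Gq ^+ n) => Gn; rewrite /Gq.
ring.
Qed.

Definition L (N h : nat) (f : {poly R}) :=
  (4%:R - 'X ^+ 2) * f^`()^`() + ('X *+ (2 * N) - 'X) * f^`()
  + f *+ (h * h) - f *+ (2 * N * h).

Lemma coef_theta F h : (theta F)`_h = F`_h *+ h.
Proof. by rewrite /theta coefXM coef_deriv; case: h => [|h] //=; rewrite mulr0n. Qed.

Lemma coef_Phi N F h : (Phi N F)`_h = L N h (F`_h).
Proof.
rewrite /Phi.
have -> : (4%:R - rr ^+ 2) = (4%:R - 'X ^+ 2 : {poly R})%:P.
  by rewrite rmorphB rmorphXn rmorph_nat.
have -> : (rr *+ (2 * N) - rr) = ('X *+ (2 * N) - 'X : {poly R})%:P.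
  by rewrite rmorphB rmorphMn.
rewrite /Phi /L coefB !coefD !coefCM !coefD_ coefMn !coef_theta.
by rewrite -!mulrnA (mulnC (2 * N)).
Qed.

Lemma ODE_d N h : L N h ((Gq ^+ N)`_h) = 0.
Proof. by rewrite -coef_Phi Phi_G coef0. Qed.


Definition sq : {poly R} := 'X ^+ 2 - 4%:R.

Lemma dsq : sq^`() = 'X *+ 2.
Proof. by rewrite /sq !derivE /= expr1 !addr0 subr0. Qed.

Lemma d_sq_pow n : (sq ^+ n.+1)^`() = 'X *+ 2 * sq ^+ n *+ n.+1.
Proof. by rewrite deriv_exp dsq. Qed.

Lemma L_conj t (f : {poly R}) :
  L (4 * t + 3) (3 * t + 2) (sq ^+ t.+1 * f) =
  sq ^+ t * (sq * L (2 * t + 1) (3 * t + 2) f + f *+ (8 * t.+1 * (6 * t + 5))).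
Proof.
rewrite /L.
case: t => [|t].
  rewrite !expr1 expr0 !(derivM, derivD, derivB, derivMn, derivX, dsq).
  rewrite /sq. ring.
rewrite !(derivMn, d_sq_pow, derivM, dsq, derivX, derivD, derivB).
rewrite [sq ^+ t.+2]exprS [sq ^+ t.+1]exprS.
move: (sq ^+ t) => B; rewrite /sq. ring.
Qed.

Lemma L_lin N h (a b : R) f g :
  L N h (a%:P * f + b%:P * g) = a%:P * L N h f + b%:P * L N h g.
Proof.
rewrite /L !(derivMn, derivM, derivC, derivX, derivD, derivB).
rewrite !mul0r !add0r. ring.
Qed.

End Gen.

Arguments E {R}.
Arguments sq {R}.
Arguments L {R}.
Arguments Gq {R}.

Section Gen2.
Variable R : comNzRingType.

Lemma coef_E N h j : (E N h ('X : {poly R}) 1)`_j =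
  \sum_(i < h.+1) (if (i - (h - i) == j)%N then ('C(N, i) * 'C(i, h - i))%:R else 0).
Proof.
rewrite /E coef_sum; apply: eq_bigr => i _.
rewrite expr1n mulr1 mulr_natl coefMn coefXn.
by rewrite eq_sym; case: (_ == j); rewrite ?mul0rn.
Qed.

Lemma coef_E_zero N h j :
  (forall i, (i <= h)%N -> [|| (i - (h - i) != j)%N, (N < i)%N | (i < h - i)%N]) ->
  (E N h ('X : {poly R}) 1)`_j = 0.
Proof.
move=> H; rewrite coef_E big1 // => i _.
have := H i; rewrite -ltnS ltn_ord => /(_ isT) /or3P [/negbTE -> //|Hi|Hi].
  by rewrite bin_small // mul0n; case: ifP.
by rewrite (bin_small Hi) muln0; case: ifP.
Qed.

Lemma coef_E_one N h j i0 : (i0 <= h)%N -> (i0 - (h - i0) = j)%N ->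
  (forall i, (i <= h)%N -> i != i0 ->
     [|| (i - (h - i) != j)%N, (N < i)%N | (i < h - i)%N]) ->
  (E N h ('X : {poly R}) 1)`_j = ('C(N, i0) * 'C(i0, h - i0))%:R.
Proof.
move=> Hi0 Hj H; rewrite coef_E.
have Hi0' : (i0 < h.+1)%N by [].
rewrite (bigD1 (Ordinal Hi0')) //= Hj eqxx big1 ?addr0 // => i Hne.
have Hne' : (nat_of_ord i != i0).
  by apply: contra Hne => /eqP He; apply/eqP/val_inj.
have := H i; rewrite -ltnS ltn_ord => /(_ isT Hne') /or3P [/negbTE -> //|Hi|Hi].
  by rewrite bin_small // mul0n; case: ifP.
by rewrite (bin_small Hi) muln0; case: ifP.
Qed.


Lemma eval_E (A : comAlgType R) (x : A) N h :
  (map_poly (in_alg A) (E N h ('X : {poly R}) 1)).[x] = E N h x 1.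
Proof.
rewrite /E rmorph_sum horner_sum; apply: eq_bigr => i _.
rewrite !expr1n !mulr1 rmorphM rmorph_nat rmorphXn /= map_polyX.
by rewrite mulr_natl hornerMn hornerXn mulr_natl.
Qed.

Lemma E_factor (a b : R) N h : a * b = 1 ->
  E N h (a + b) 1 = \sum_(j < h.+1) ('C(N, j) * 'C(N, h - j))%:R
                        * a ^+ (N - j) * b ^+ (N - (h - j)).
Proof.
move=> hab; rewrite -coef_quad_exp.
have -> : 'X ^+ 2 + (a + b)%:P * 'X + 1%:P = ('X + a%:P) * ('X + b%:P).
  have hab' : a%:P * b%:P = 1%:P :> {poly R} by rewrite -rmorphM hab.
  rewrite rmorphD -hab'; ring.
rewrite exprMn coefM; apply: eq_bigr => j _.
rewrite !coef_XaddC_exp natrM; ring.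
Qed.

Definition Z2 : {poly {poly R}} := 'X.
Definition R2 : {poly {poly R}} := ('X : {poly R})%:P.
Definition W3 : {poly {poly {poly R}}} :=
  'X ^+ 4 + R2%:P * 'X ^+ 2 * (Z2%:P) ^+ 2 + (Z2%:P) ^+ 4.
Definition V3 : {poly {poly {poly R}}} :=
  'X ^+ 2 + (R2 * Z2 ^+ 2)%:P * 'X + (Z2 ^+ 4)%:P.

Lemma quartic_split :
  (let x : {poly {poly {poly {poly R}}}} := 'X in
  let y : {poly {poly {poly {poly R}}}} := ('X)%:P in
  let z : {poly {poly {poly {poly R}}}} := ('X)%:P%:P in
  let r : {poly {poly {poly {poly R}}}} := ('X)%:P%:P%:P in
  x ^+ 3 * z + y ^+ 4 + r * y ^+ 2 * z ^+ 2 + z ^+ 4)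
  = 'X ^+ 3 * (Z2%:P)%:P + W3%:P.
Proof.
rewrite /W3 /Z2 /R2 /= !rmorphD !rmorphM /=. ring.
Qed.

Lemma coef_x (A B : {poly {poly {poly R}}}) n k : (k <= n)%N ->
  (('X ^+ 3 * A%:P + B%:P) ^+ n)`_(3 * k) = A ^+ k * B ^+ (n - k) *+ 'C(n, n - k).
Proof.
move=> Hk; rewrite exprDn coef_sum.
have Hi0 : (n - k < n.+1)%N by lia.
rewrite (bigD1 (Ordinal Hi0)) //= big1 ?addr0.
  rewrite coefMn exprMn -exprM -!rmorphXn -mulrA -rmorphM coefXnM.
  have -> : (3 * k < 3 * (n - (n - k)))%N = false by lia.
  rewrite coefC.
  have -> : (3 * k - 3 * (n - (n - k)) == 0)%N by lia.
  by have -> : (n - (n - k) = k)%N by lia.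
move=> i Hne.
rewrite coefMn exprMn -exprM -!rmorphXn -mulrA -rmorphM coefXnM coefC.
case: ltnP => H1; first by rewrite mul0rn.
case: eqP => H2; last by rewrite mul0rn.
exfalso; apply/negP: Hne; rewrite negbK; apply/eqP/val_inj => /=.
have := ltn_ord i; lia.
Qed.

Lemma W_comp : W3 = V3 \Po 'X ^+ 2.
Proof.
rewrite /W3 /V3 !comp_polyD !comp_polyM !comp_polyC comp_polyX.
rewrite !polyCM. ring.
Qed.


Lemma coef_y k m h C :
  ((Z2%:P) ^+ k * W3 ^+ m *+ C)`_(2 * h) = Z2 ^+ k * E m h (R2 * Z2 ^+ 2) (Z2 ^+ 4) *+ C.
Proof.
rewrite coefMn -rmorphXn coefCM W_comp -rmorphXn coef_comp_poly_Xn //.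
by rewrite dvdn_mulr // mulKn // coef_quad_exp.
Qed.

Lemma E_hom m h : (2 * h <= 4 * m)%N ->
  E m h (R2 * Z2 ^+ 2) (Z2 ^+ 4) = (E m h ('X : {poly R}) 1)%:P * Z2 ^+ (4 * m - 2 * h).
Proof.
move=> Hmh; rewrite /E rmorph_sum big_distrl; apply: eq_bigr => i _ /=.
case: (ltnP m i) => H1; first by rewrite bin_small // !mul0n !mul0r.
case: (ltnP i (h - i)) => H2; first by rewrite (bin_small H2) !muln0 !mul0r.
have He : Z2 ^+ (4 * m - 2 * h) = Z2 ^+ (2 * (i - (h - i))) * Z2 ^+ (4 * (m - i)).
  by rewrite -exprD; congr (_ ^+ _); have := ltn_ord i; lia.
rewrite expr1n mulr1 He exprMn -!exprM polyCM polyC_exp polyC_natr /R2.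
ring.
Qed.

Lemma coef_z k m h C : (2 * h <= 4 * m)%N ->
  (Z2 ^+ k * E m h (R2 * Z2 ^+ 2) (Z2 ^+ 4) *+ C)`_(k + (4 * m - 2 * h))
  = E m h ('X : {poly R}) 1 *+ C.
Proof.
move=> Hmh; rewrite E_hom // coefMn mulrCA -exprD coefCM /Z2 coefXn eqxx.
by rewrite mulr1.
Qed.

Lemma c_formula n k h : (k <= n)%N -> (2 * h <= 4 * (n - k))%N ->
  (((('X ^+ 3 * (Z2%:P)%:P + W3%:P) ^+ n)`_(3 * k))`_(2 * h))`_(k + (4 * (n - k) - 2 * h))
  = E (n - k) h ('X : {poly R}) 1 *+ 'C(n, n - k).
Proof.
move=> Hk Hh; rewrite coef_x // coef_y coef_z //.
Qed.

End Gen2.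

Arguments Z2 {R}.
Arguments R2 {R}.
Arguments W3 {R}.
Arguments V3 {R}.
Arguments rr {R}.

Section Gen3.
Variable R : comNzRingType.

Lemma coef_L N h (f : {poly R}) j :
  (L N h f)`_j = f`_(j.+2) *+ (4 * (j.+2 * j.+1)) + f`_j *+ (2 * N * j + h * h)
                 - f`_j *+ (j * j + 2 * N * h).
Proof.
rewrite /L !coefB !coefD !mulrBl !coefB mulr_natl !mulrnAl !coefMn coefXnM !coefXM.
rewrite !coef_deriv.
case: j => [|[|j]] /=.
- ring.
- ring.
- have -> : (j.+2 - 2 = j)%N by lia.
  ring.
Qed.

End Gen3.


Section Sums.
Variable A : comNzRingType.

Lemma match1 t (a b : A) :
  \sum_(j < (3 * t + 2).+1) ('C(4 * t + 3, j) * 'C(4 * t + 3, 3 * t + 2 - j))%:R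
     * a ^+ (4 * t + 3 - j) * b ^+ (4 * t + 3 - (3 * t + 2 - j))
  = (a * b) ^+ (t + 1) * bsum (4 * t + 3) (3 * t + 2) a b.
Proof.
rewrite /bsum big_distrr /= [RHS](reindex_inj rev_ord_inj) /=.
apply: eq_bigr => j _.
have Hj := ltn_ord j.
rewrite subSS.
have -> : (3 * t + 2 - (3 * t + 2 - j) = j)%N by lia.
have -> : (4 * t + 3 - j = (t + 1) + (3 * t + 2 - j))%N by lia.
have -> : (4 * t + 3 - (3 * t + 2 - j) = (t + 1) + j)%N by lia.
rewrite !exprD exprMn mulnC; ring.
Qed.


Lemma match2 t (a b : A) :
  \sum_(j < (3 * t + 2).+1) ('C(2 * t + 1, j) * 'C(2 * t + 1, 3 * t + 2 - j))%:R
     * a ^+ (2 * t + 1 - j) * b ^+ (2 * t + 1 - (3 * t + 2 - j))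
  = bsum (2 * t + 1) t a b.
Proof.
set G := fun j : nat => ('C(2 * t + 1, j) * 'C(2 * t + 1, 3 * t + 2 - j))%:R
     * a ^+ (2 * t + 1 - j) * b ^+ (2 * t + 1 - (3 * t + 2 - j)).
rewrite -(big_mkord xpredT G).
rewrite (big_cat_nat (n := t + 1)) //=; last by lia.
rewrite big_nat_cond big1 ?add0r; last first.
  move=> j /andP [/andP [_ Hj] _]; rewrite /G (bin_small (n := 2 * t + 1) (m := 3 * t + 2 - j)) ?muln0 ?mul0r //; lia.
rewrite (big_cat_nat (n := 2 * t + 2)) //=; try lia.
rewrite [X in _ + X]big_nat_cond [X in _ + X]big1 ?addr0; last first.
  move=> j /andP [/andP [Hj _] _]; rewrite /G (bin_small (n := 2 * t + 1)) ?mul0n ?mul0r //; lia.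
rewrite -{1}[(t + 1)%N]add0n big_addn.
have -> : (2 * t + 2 - (t + 1) = t.+1)%N by lia.
rewrite big_mkord /bsum [RHS](reindex_inj rev_ord_inj) /=.
apply: eq_bigr => i _; rewrite /G.
have Hi := ltn_ord i.
rewrite subSS.
have -> : (t - (t - i) = i)%N by lia.
have -> : (2 * t + 1 - (i + (t + 1)) = t - i)%N by lia.
have -> : (3 * t + 2 - (i + (t + 1)) = 2 * t + 1 - i)%N by lia.
have -> : (2 * t + 1 - (2 * t + 1 - i) = i)%N by lia.
rewrite bin_sub; last by lia.
have -> : ('C(2 * t + 1, i + (t + 1)) = 'C(2 * t + 1, t - i))%N.
  rewrite -bin_sub; last by lia.
  by congr 'C(_, _); lia.
rewrite mulnC; ring.
Qed.

End Sums.

Section Fp.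
Variable t : nat.
Hypothesis hp : prime (6 * t + 5).
Local Notation p := (6 * t + 5)%N.
Local Notation F := 'F_(6 * t + 5).

Lemma natr_neq0 n : (0 < n < p)%N -> (n%:R : F) != 0.
Proof.
move=> /andP [H0 H1]; apply/eqP => H.
have := val_Fp_nat hp n; rewrite H modn_small //= => H2.
by move: H0; rewrite -H2.
Qed.

Lemma pF0 : (p%:R : F) = 0.
Proof. exact: pchar_Fp_0. Qed.

Lemma fact_neq0 n : (n < p)%N -> (n`!%:R : F) != 0.
Proof.
elim: n => [|n IH] H; first by rewrite fact0 oner_eq0.
rewrite factS natrM mulf_neq0 ?IH ?natr_neq0 //; lia.
Qed.

Lemma bin_neq0 n k : (n < p)%N -> (k <= n)%N -> ('C(n, k)%:R : F) != 0.
Proof.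
move=> Hn Hk; have := bin_fact Hk => /(congr1 (fun m => (m%:R : F))).
rewrite !natrM => H; apply/eqP => H0; move: H; rewrite H0 !mul0r => /esym/eqP.
by apply/negP; apply: fact_neq0.
Qed.

Lemma binm1 k : (k < p)%N -> ('C(6 * t + 4, k)%:R : F) = (-1) ^+ k.
Proof.
elim: k => [|k IH] H; first by rewrite bin0.
have H1 := mul_bin_left (6 * t + 4) k.
have := congr1 (fun m => (m%:R : F)) H1; rewrite !natrM.
have -> : ((6 * t + 4 - k)%:R : F) = - (k.+1)%:R.
  apply/eqP; rewrite -addr_eq0 -natrD.
  have -> : (6 * t + 4 - k + k.+1 = p)%N by lia.
  by rewrite pF0.
rewrite IH; last by lia.
have Hk : (0 < k.+1 < p)%N by lia.
move=> H2; apply: (@mulfI _ (k.+1)%:R); first exact: natr_neq0.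
by rewrite H2 exprS; ring.
Qed.


Definition dd N : {poly F} := E N (3 * t + 2) 'X 1.

Lemma dd_Gq N : (Gq ^+ N)`_(3 * t + 2) = dd N.
Proof. by rewrite /dd /Gq /rr -polyC1 coef_quad_exp. Qed.

Lemma yq_comp : yquartic p = Gq \Po 'X ^+ 2.
Proof.
rewrite /yquartic /Gq /rr !comp_polyD !comp_polyM !comp_polyC comp_polyX polyC1.
ring.
Qed.

Lemma d_eq N : (yquartic p ^+ N)`_(6 * t + 4) = dd N.
Proof.
rewrite yq_comp -rmorphXn /= coef_comp_poly_Xn //.
have -> : (6 * t + 4 = 2 * (3 * t + 2))%N by lia.
by rewrite dvdn_mulr // mulKn // dd_Gq.
Qed.

Lemma d1_eq : d1 p = dd (4 * t + 3).
Proof.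
rewrite /d1; have -> : ((2 * p - 1) %/ 3 = 4 * t + 3)%N by lia.
have -> : (p - 1 = 6 * t + 4)%N by lia.
exact: d_eq.
Qed.

Lemma d2_eq : d2 p = dd (2 * t + 1).
Proof.
rewrite /d2; have -> : ((p - 2) %/ 3 = 2 * t + 1)%N by lia.
have -> : (p - 1 = 6 * t + 4)%N by lia.
exact: d_eq.
Qed.

Lemma ODE_dd N : L N (3 * t + 2) (dd N) = 0.
Proof. by rewrite -dd_Gq ODE_d. Qed.

Lemma quartic_eq : quartic p = 'X ^+ 3 * (Z2%:P)%:P + W3%:P.
Proof. rewrite /quartic; exact: quartic_split. Qed.

Lemma c_gen (n k h a b c : nat) : (k <= n)%N -> (2 * h <= 4 * (n - k))%N ->
  a = (3 * k)%N -> b = (2 * h)%N -> c = (k + (4 * (n - k) - 2 * h))%N ->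
  (((quartic p ^+ n)`_a)`_b)`_c = E (n - k) h ('X : {poly F}) 1 *+ 'C(n, n - k).
Proof. by move=> H1 H2 -> -> ->; rewrite quartic_eq c_formula. Qed.

Lemma c1_eq : c1 p = - dd (4 * t + 3).
Proof.
rewrite /c1 /coef_xyz.
have -> : (p - 1 = 6 * t + 4)%N by lia.
rewrite (@c_gen (6 * t + 4) (2 * t + 1) (3 * t + 2)); try lia.
have -> : (6 * t + 4 - (2 * t + 1) = 4 * t + 3)%N by lia.
rewrite -scaler_nat binm1; last by lia.
have -> : (4 * t + 3 = (2 * (2 * t + 1)).+1)%N by lia.
by rewrite exprS exprM expr2 mulrNN mulr1 expr1n mulr1 scaleN1r.
Qed.

Lemma c2_eq : c2 p = - dd (2 * t + 1).
Proof.
rewrite /c2 /coef_xyz.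
have -> : (p - 1 = 6 * t + 4)%N by lia.
rewrite (@c_gen (6 * t + 4) (4 * t + 3) (3 * t + 2)); try lia.
have -> : (6 * t + 4 - (4 * t + 3) = 2 * t + 1)%N by lia.
rewrite -scaler_nat binm1; last by lia.
have -> : (2 * t + 1 = (2 * t).+1)%N by lia.
by rewrite exprS exprM expr2 mulrNN mulr1 expr1n mulr1 scaleN1r.
Qed.


Lemma size_eqP (q : {poly F}) n : q`_n != 0 -> (forall j, (n < j)%N -> q`_j = 0) ->
  size q = n.+1.
Proof.
move=> Hn Hz; apply/eqP; rewrite eqn_leq; apply/andP; split.
  by apply/leq_sizeP => j Hj; apply: Hz.
by case: leqP => // /leq_sizeP /(_ n (leqnn n)) H; rewrite H eqxx in Hn.
Qed.

Lemma dd1_top : (dd (4 * t + 3))`_(3 * t + 2) = ('C(4 * t + 3, 3 * t + 2))%:R.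
Proof.
rewrite /dd (@coef_E_one _ _ _ _ (3 * t + 2)); rewrite ?subnn ?subn0 ?bin0 ?muln1 //.
move=> i Hi Hne; lia.
Qed.

Lemma dd1_size : size (dd (4 * t + 3)) = (3 * t + 2).+1.
Proof.
apply: size_eqP; first by rewrite dd1_top bin_neq0 //; lia.
move=> j Hj; rewrite /dd coef_E_zero // => i Hi; apply/orP; left; lia.
Qed.

Lemma dd2_top : (dd (2 * t + 1))`_t = ('C(2 * t + 1, t + 1))%:R.
Proof.
rewrite /dd (@coef_E_one _ _ _ _ (2 * t + 1)); try lia.
rewrite binn mul1n; congr (_ %:R); congr 'C(_, _); lia.
Qed.

Lemma dd2_size : size (dd (2 * t + 1)) = t.+1.
Proof.
apply: size_eqP; first by rewrite dd2_top bin_neq0 //; lia.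
move=> j Hj; rewrite /dd coef_E_zero // => i Hi; lia.
Qed.

Lemma dd2_lead : lead_coef (dd (2 * t + 1)) != 0.
Proof. by rewrite lead_coefE dd2_size /= dd2_top bin_neq0 //; lia. Qed.


Lemma part1_even s : t = (2 * s)%N ->
  (exists q : {poly F}, dd (2 * t + 1) = q \Po 'X ^+ 2) /\ (dd (2 * t + 1))`_0 != 0.
Proof.
move=> ht; split.
  exists (even_poly (dd (2 * t + 1))).
  have Ho : odd_poly (dd (2 * t + 1)) = 0.
    apply/polyP => k; rewrite coef_odd_poly coef0 /dd coef_E_zero // => i Hi.
    rewrite -muln2; lia.
  by rewrite -{1}(poly_even_odd (dd (2 * t + 1))) Ho comp_poly0 mul0r addr0.
rewrite /dd (@coef_E_one _ _ _ _ (3 * s + 1)); try lia.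
rewrite natrM mulf_neq0 // bin_neq0 //; lia.
Qed.

Lemma part1_odd s : t = (2 * s + 1)%N ->
  exists q : {poly F}, dd (2 * t + 1) = 'X * (q \Po 'X ^+ 2) /\ q`_0 != 0.
Proof.
move=> ht; exists (odd_poly (dd (2 * t + 1))); split.
  have He : even_poly (dd (2 * t + 1)) = 0.
    apply/polyP => k; rewrite coef_even_poly coef0 /dd coef_E_zero // => i Hi.
    rewrite -muln2; lia.
  by rewrite -{1}(poly_even_odd (dd (2 * t + 1))) He comp_poly0 add0r mulrC.
rewrite coef_odd_poly /= /dd (@coef_E_one _ _ _ _ (3 * s + 3)); try lia.
rewrite natrM mulf_neq0 // bin_neq0 //; lia.
Qed.


Lemma nondiv N m : (m <= N)%N -> (N < p)%N ->
  ~~ (('X%:P * 'X) %| bsum N m (('X : {poly F})%:P) ('X : {poly {poly F}})).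
Proof.
move=> HmN HN; apply/negP => Hd.
have HX : ('X : {poly {poly F}}) %| bsum N m (('X : {poly F})%:P) 'X.
  by apply: dvdp_trans Hd; apply: dvdp_mull; apply: dvdpp.
have HX' : ('X - (0 : {poly F})%:P) %| bsum N m (('X : {poly F})%:P) 'X.
  by rewrite polyC0 subr0.
move: HX'; rewrite dvdp_XsubCl /root => /eqP.
rewrite /bsum horner_sum.
have Hm : (m < m.+1)%N by [].
rewrite (bigD1 (Ordinal Hm)) //= big1 ?addr0; last first.
  move=> i Hne; rewrite !hornerE expr0n.
  have -> : (m - i == 0)%N = false.
    have := ltn_ord i; have : nat_of_ord i != m.
      by apply: contra Hne => /eqP He; apply/eqP/val_inj.
    lia.
  by rewrite mulr0.
rewrite !hornerE subnn expr0 mulr1 bin0 muln1 -polyC_natr hornerC.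
move/eqP; apply/negP; rewrite mulf_neq0 //.
  by rewrite -polyC_natr polyC_eq0 bin_neq0 //; lia.
by rewrite expf_neq0 // polyX_eq0.
Qed.


Lemma rec_step (f : {poly F}) j : L (4 * t + 3) (3 * t + 2) f = 0 -> (j < 3 * t + 2)%N ->
  f`_(j.+2) = 0 -> f`_j = 0.
Proof.
move=> HL Hj Hj2; have := @coef_L _ (4 * t + 3) (3 * t + 2) f j.
rewrite HL coef0 Hj2 mul0rn add0r => /eqP; rewrite eq_sym subr_eq0 => /eqP H.
have HK : (j * j + 2 * (4 * t + 3) * (3 * t + 2) =
          2 * (4 * t + 3) * j + (3 * t + 2) * (3 * t + 2)
          + (3 * t + 2 - j) * (5 * t + 4 - j))%N by nia.
move: H; rewrite HK [RHS]mulrnDr -[X in X = _]addr0 => /addrI /esym.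
rewrite -mulr_natr natrM => /eqP; rewrite mulf_eq0 => /orP [/eqP //|].
rewrite mulf_eq0 => /orP [] /eqP H.
  by exfalso; move: H; apply/eqP; apply: natr_neq0; lia.
by exfalso; move: H; apply/eqP; apply: natr_neq0; lia.
Qed.


Lemma L_unique (f : {poly F}) : L (4 * t + 3) (3 * t + 2) f = 0 ->
  (size f <= (3 * t + 2).+1)%N -> f`_(3 * t + 2) = 0 -> f = 0.
Proof.
move=> HL Hs Hh.
have Hs' := Hs; move/leq_sizeP: Hs' => Hs'.
have Hz : forall k, (k <= 3 * t + 2)%N -> f`_(3 * t + 2 - k) = 0 /\ f`_(3 * t + 3 - k) = 0.
  elim => [|k IH] Hk.
    by rewrite !subn0 Hh Hs' //; lia.
  have [IH1 IH2] := IH (ltnW Hk).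
  split.
    apply: (@rec_step f (3 * t + 2 - k.+1) HL); first by lia.
    by have -> : ((3 * t + 2 - k.+1).+2 = 3 * t + 3 - k)%N by lia.
  by have -> : (3 * t + 3 - k.+1 = 3 * t + 2 - k)%N by lia.
apply/polyP => j; rewrite coef0; case: (leqP j (3 * t + 2)) => Hj.
  have Hk : (3 * t + 2 - j <= 3 * t + 2)%N by lia.
  have [] := Hz (3 * t + 2 - j)%N Hk.
  by rewrite subKn.
by apply: Hs'.
Qed.


Lemma sq_monic : (sq : {poly F}) \is monic.
Proof. by rewrite /sq -polyC_natr monicXnsubC. Qed.

Lemma size_sq : size (sq : {poly F}) = 3%N.
Proof. by rewrite /sq -polyC_natr size_XnsubC. Qed.

Lemma part3 : dd (2 * t + 1) %| dd (4 * t + 3).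
Proof.
set d1 := dd (4 * t + 3); set d2 := dd (2 * t + 1).
set y := sq ^+ t.+1 * d2.
have Ly : L (4 * t + 3) (3 * t + 2) y = 0.
  rewrite /y L_conj ODE_dd mulr0 add0r mulrnA -mulr_natr -polyC_natr pF0 polyC0.
  by rewrite !mulr0.
have Ld1 : L (4 * t + 3) (3 * t + 2) d1 = 0 by apply: ODE_dd.
have Hsqn : (sq : {poly F}) ^+ t.+1 \is monic by apply: monic_exp; apply: sq_monic.
have Hd2 : d2 != 0 by rewrite -size_poly_eq0 /d2 dd2_size.
have Hsy : size y = (3 * t + 2).+1.
  have Hs1 : size ((sq : {poly F}) ^+ t.+1) = (2 * t.+1).+1.
    have := size_exp (sq : {poly F}) t.+1; rewrite size_sq /= => H.
    have : size ((sq : {poly F}) ^+ t.+1) != 0%N by rewrite size_poly_eq0 monic_neq0.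
    by move=> Hn; rewrite -H prednK // lt0n.
  rewrite /y mulrC size_Mmonic // /d2 dd2_size Hs1; lia.
have Hyh : y`_(3 * t + 2) = lead_coef d2.
  have -> : (3 * t + 2 = (size y).-1)%N by rewrite Hsy.
  rewrite -lead_coefE /y lead_coefM lead_coef_exp.
  by move/monicP: sq_monic => ->; rewrite expr1n mul1r.
have Hyh0 : y`_(3 * t + 2) != 0 by rewrite Hyh dd2_lead.
set g := (y`_(3 * t + 2))%:P * d1 + (- d1`_(3 * t + 2))%:P * y.
have Lg : L (4 * t + 3) (3 * t + 2) g = 0 by rewrite /g L_lin Ly Ld1 !mulr0 addr0.
have Hsg : (size g <= (3 * t + 2).+1)%N.
  rewrite /g; apply: leq_trans (size_polyD _ _) _; rewrite geq_max !mul_polyC.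
  apply/andP; split; apply: leq_trans (size_scale_leq _ _) _.
    by rewrite /d1 dd1_size.
  by rewrite Hsy.
have Hgh : g`_(3 * t + 2) = 0.
  by rewrite /g coefD !coefCM mulNr mulrC subrr.
have g0 := @L_unique g Lg Hsg Hgh.
have Hd1 : d1 = ((y`_(3 * t + 2))^-1 * d1`_(3 * t + 2))%:P * sq ^+ t.+1 * d2.
  move: g0; rewrite /g => /eqP; rewrite addr_eq0 => /eqP H.
  rewrite polyCN mulNr opprK in H.
  by rewrite -mulrA -/y polyCM -mulrA -H mulrA -polyCM mulVf // polyC1 mul1r.
by rewrite Hd1 dvdp_mulIr.
Qed.

End Fp.


Theorem proposition3p2 (p : nat) (hp : prime p) (hp6 : (p %% 6 = 5)%N) :
  (* the stated relations d_i = C(p-1,(p-2)/3) c_i *)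
  (d1 p = ('C(p - 1, (p - 2) %/ 3)%:R : 'F_p) *: c1 p /\
   d2 p = ('C(p - 1, (p - 2) %/ 3)%:R : 'F_p) *: c2 p) /\
  (* part 1 *)
  (((p %% 12 = 5)%N ->
      (exists q : {poly 'F_p}, d2 p = q \Po 'X ^+ 2) /\ (d2 p)`_0 != 0) /\
   ((p %% 12 = 11)%N ->
      exists q : {poly 'F_p}, d2 p = 'X * (q \Po 'X ^+ 2) /\ q`_0 != 0)) /\
  (* part 2 *)
  ((forall (A : comAlgType 'F_p) (a b : A), a * b = 1 ->
      (map_poly (in_alg A) (d1 p)).[a + b]
        = (a * b) ^+ ((p + 1) %/ 6) * bsum ((2 * p - 1) %/ 3) ((p - 1) %/ 2) a b
   /\ (map_poly (in_alg A) (d2 p)).[a + b]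
        = bsum ((p - 2) %/ 3) ((p - 5) %/ 6) a b) /\
   ~~ (('X%:P * 'X) %| bsum ((2 * p - 1) %/ 3) ((p - 1) %/ 2)
                          (('X : {poly 'F_p})%:P) ('X : {poly {poly 'F_p}})) /\
   ~~ (('X%:P * 'X) %| bsum ((p - 2) %/ 3) ((p - 5) %/ 6)
                          (('X : {poly 'F_p})%:P) ('X : {poly {poly 'F_p}})) /\
   size (c1 p) = (((p - 1) %/ 2).+1)%N /\ size (d1 p) = (((p - 1) %/ 2).+1)%N /\
   size (c2 p) = (((p - 5) %/ 6).+1)%N /\ size (d2 p) = (((p - 5) %/ 6).+1)%N) /\
  (* part 3 *)
  (c2 p %| c1 p /\ d2 p %| d1 p).
Proof.
have [t ht] : exists t, p = (6 * t + 5)%N by exists (p %/ 6)%N; lia.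
subst p.
have e1 : ((6 * t + 5 - 2) %/ 3 = 2 * t + 1)%N by lia.
have e2 : ((6 * t + 5 - 1) = 6 * t + 4)%N by lia.
have e3 : ((6 * t + 5 + 1) %/ 6 = t + 1)%N by lia.
have e4 : ((2 * (6 * t + 5) - 1) %/ 3 = 4 * t + 3)%N by lia.
have e5 : ((6 * t + 4) %/ 2 = 3 * t + 2)%N by lia.
have e6 : ((6 * t + 5 - 5) %/ 6 = t)%N by lia.
rewrite e1 e2 e3 e4 e5 e6 (d1_eq _ hp) (d2_eq _ hp) (c1_eq _ hp) (c2_eq _ hp).
have Hm1 : ('C(6 * t + 4, 2 * t + 1)%:R : 'F_(6 * t + 5)) = -1.
  rewrite (binm1 _ hp); last by lia.
  have -> : (2 * t + 1 = (2 * t).+1)%N by lia.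
  by rewrite exprS exprM expr2 mulrNN mulr1 expr1n mulr1.
rewrite Hm1 !scaleN1r !opprK.
split; first by [].
split.
  split.
    move=> H12; have [s Hs] : exists s, t = (2 * s)%N by exists (t %/ 2)%N; lia.
    exact: (part1_even _ hp _ Hs).
  move=> H12; have [s Hs] : exists s, t = (2 * s + 1)%N by exists (t %/ 2)%N; lia.
  exact: (part1_odd _ hp _ Hs).
split.
  split.
    move=> A a b hab; split.
      by rewrite /dd eval_E E_factor // match1.
    by rewrite /dd eval_E E_factor // match2.
  split; first by apply: (nondiv _ hp); lia.
  split; first by apply: (nondiv _ hp); lia.
  by rewrite !size_polyN (dd1_size _ hp) (dd2_size _ hp).
by rewrite dvdpNl dvdpNr (part3 _ hp).
Qed.
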